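(* Let $\mathcal{M}=\langle S,\iota,\mathsf{Act},P,\mathsf{Z},\mathsf{obs}\rangle$ be an MDP, $\tau\in\mathsf{Z}^+$ a trace and $r\colon S\to\mathbb{R}_{\ge0}$ a state-risk function. Then $R_r(\tau)=\sup_{\mathsf{bel}\in\mathsf{est}_{\mathsf{MDP}}(\tau)}\sum_{s\in S}\mathsf{bel}(s)\cdot r(s)$.
   Context: An MDP is a tuple $\langle S,\iota,\mathsf{Act},P,\mathsf{Z},\mathsf{obs}\rangle$: finite state set $S$, initial distribution $\iota\in\mathsf{Distr}(S)$, finite action set $\mathsf{Act}$, partial transition function $P\colon S\times\mathsf{Act}\rightharpoonup\mathsf{Distr}(S)$ (write $P(s,\alpha,s')=P(s,\alpha)(s')$), finite observation set $\mathsf{Z}$, observation function $\mathsf{obs}\colon S\to\mathsf{Distr}(\mathsf{Z})$; $\mathsf{AvAct}(s)=\{\alpha\mid P(s,\alpha)\text{ defined}\}\neq\emptyset$. A finite path is $\pi=s_0a_0\dots a_{n-1}s_n$ with $\iota(s_0)>0$, $P(s_i,a_i)(s_{i+1})>0$; $\mathrm{last}(\pi)=s_n$. A scheduler $\sigma$ maps each finite path $\pi$ to a distribution on $\mathsf{AvAct}(\mathrm{last}(\pi))$; $\Sigma$ is the set of schedulers; $\Pr^\sigma(\pi)=\iota(s_0)\prod_{i<n}\sigma(s_0a_0\dots s_i)(a_i)P(s_i,a_i)(s_{i+1})$. For a trace $\tau=z_0\dots z_n\in\mathsf{Z}^+$ and path $\pi=s_0\dots s_m$, $\Pr(\tau\mid\pi)=\prod_{i=0}^n\mathsf{obs}(s_i)(z_i)$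 if $m=n$, else $0$; $\mathrm{Paths}(\tau)$ are the paths with as many states as $\tau$ has observations; $\Pr^\sigma(\tau)=\sum_\pi\Pr^\sigma(\pi)\Pr(\tau\mid\pi)$; $\Pr^\sigma(\pi\mid\tau)=\Pr(\tau\mid\pi)\Pr^\sigma(\pi)/\Pr^\sigma(\tau)$ with $0/0=0$. The weighted risk is $R_r(\tau)=\sup_{\sigma\in\Sigma}\sum_{\pi\in\mathrm{Paths}(\tau)}\Pr^\sigma(\pi\mid\tau)r(\mathrm{last}(\pi))$. Beliefs: $\mathsf{Bel}=\mathsf{Distr}(S)\cup\{\mathbf{0}\}$, $\mathbf{0}$ the zero function on $S$. Define $\mathsf{est}_{\mathsf{MDP}}\colon\mathsf{Z}^+\to2^{\mathsf{Bel}}$ by $\mathsf{est}_{\mathsf{MDP}}(z)=\{b_z\}$ where $b_z(s)=\iota(s)\mathsf{obs}(s)(z)/\sum_{\hat s}\iota(\hat s)\mathsf{obs}(\hat s)(z)$ if some $s$ has $\iota(s)\mathsf{obs}(s)(z)>0$ and $b_z=\mathbf{0}$ otherwise; and $\mathsf{est}_{\mathsf{MDP}}(\tau\cdot z)=\bigcup_{\mathsf{bel}\in\mathsf{est}_{\mathsf{MDP}}(\tau)}\mathsf{est}^{\mathsf{up}}(\mathsf{bel},z)$, where $\mathsf{bel}'\in\mathsf{est}^{\mathsf{up}}(\mathsf{bel},z)$ iff there is $\varsigma\colon S\to\mathsf{Distr}(\mathsf{Act})$ with $\varsigma(s)$ supported in $\mathsf{AvAct}(s)$ such that for all $s'$: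 $\mathsf{bel}'(s')=\dfrac{\sum_s\mathsf{bel}(s)\sum_\alpha\varsigma(s)(\alpha)P(s,\alpha,s')\mathsf{obs}(s')(z)}{\sum_s\mathsf{bel}(s)\sum_\alpha\varsigma(s)(\alpha)\sum_{\hat s}P(s,\alpha,\hat s)\mathsf{obs}(\hat s)(z)}$ (with $0/0=0$). *)

(* Defs.v *)
From HB Require Import structures.
From mathcomp Require Import all_boot all_order all_algebra.
From mathcomp Require Import classical_sets boolp reals.
Set Implicit Arguments. Unset Strict Implicit. Unset Printing Implicit Defensive.
Import Order.TTheory GRing.Theory Num.Theory.
Local Open Scope ring_scope.
Local Open Scope classical_set_scope.

Section MDPDefs.
Variables (R : realType) (S Act Z : finType).

Definition is_distr (T : finType) (d : {ffun T -> R}) : Prop :=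
  (forall t, 0 <= d t) /\ \sum_(t : T) d t = 1.

(* An MDP <S, iota, Act, P, Z, obs>; P is partial (None = undefined). *)
Record MDP := mkMDP {
  iota : {ffun S -> R};
  P : S -> Act -> option {ffun S -> R};
  obs : S -> {ffun Z -> R}
}.

Definition wf_MDP (M : MDP) : Prop :=
  [/\ is_distr (iota M),
      (forall s a d, P M s a = Some d -> is_distr d),
      (forall s, is_distr (obs M s)) &
      (forall s, exists a, P M s a <> None)].

Definition Pt (M : MDP) (s : S) (a : Act) (s' : S) : R :=
  if P M s a is Some d then d s' else 0.

(* a scheduler maps a finite path, given as the list of (state,action) pairs
   (s_0,a_0)...(s_{n-1},a_{n-1}) followed by the last state s_n, to a
   distribution on the available actions of the last state *)
Definition scheduler := seq (S * Act) -> S -> {ffun Act -> R}.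

Definition is_scheduler (M : MDP) (sigma : scheduler) : Prop :=
  forall h s, is_distr (sigma h s) /\
              (forall a, P M s a = None -> sigma h s a = 0).

Section Trace.
(* the trace tau = z0 :: zs, of length n.+1 with n = size zs;
   paths in Paths(tau) are ss_0 acts_0 ss_1 ... acts_{n-1} ss_n *)
Variables (M : MDP) (z0 : Z) (zs : seq Z).
Let n := size zs.

Definition tr (i : nat) : Z := nth z0 (z0 :: zs) i.

Definition hist (ss : {ffun 'I_n.+1 -> S}) (acts : {ffun 'I_n -> Act})
  (i : nat) : seq (S * Act) :=
  map (fun j : 'I_n => (ss (inord j), acts j))
      (filter (fun k : 'I_n => (k < i)%N) (enum 'I_n)).

Definition Pr_path (sigma : scheduler) (ss : {ffun 'I_n.+1 -> S})
  (acts : {ffun 'I_n -> Act}) : R :=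
  iota M (ss ord0) *
  \prod_(i < n) (sigma (hist ss acts i) (ss (inord i)) (acts i) *
                 Pt M (ss (inord i)) (acts i) (ss (inord i.+1))).

Definition Pr_obs (ss : {ffun 'I_n.+1 -> S}) : R :=
  \prod_(i < n.+1) obs M (ss i) (tr i).

Definition Pr_trace (sigma : scheduler) : R :=
  \sum_(ss : {ffun 'I_n.+1 -> S}) \sum_(acts : {ffun 'I_n -> Act})
     Pr_path sigma ss acts * Pr_obs ss.

(* sum_{pi in Paths(tau)} Pr^sigma(pi | tau) r(last pi)  (x / 0 = 0) *)
Definition risk_value (r : S -> R) (sigma : scheduler) : R :=
  \sum_(ss : {ffun 'I_n.+1 -> S}) \sum_(acts : {ffun 'I_n -> Act})
     (Pr_obs ss * Pr_path sigma ss acts / Pr_trace sigma) * r (ss ord_max).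

Definition weighted_risk (r : S -> R) : R :=
  sup [set v | exists sigma, is_scheduler M sigma /\ v = risk_value r sigma].

End Trace.

(* beliefs: functions S -> R (distributions or the zero function) *)
Definition belief := {ffun S -> R}.

Definition init_belief (M : MDP) (z : Z) : belief :=
  if [exists s, 0 < iota M s * obs M s z] then
    [ffun s => iota M s * obs M s z /
               \sum_(s0 : S) iota M s0 * obs M s0 z]
  else [ffun => 0].

(* est^up(bel, z); division by 0 yields 0 in MathComp, matching 0/0 = 0 *)
Definition est_up (M : MDP) (bel : belief) (z : Z) : set belief :=
  [set bel' | exists vs : S -> {ffun Act -> R},
     (forall s, is_distr (vs s) /\ (forall a, P M s a = None -> vs s a = 0)) /\
     (forall s', bel' s' =
        (\sum_(s : S) bel s * \sum_(a : Act) vs s a * Pt M s a s' * obs M s' z) /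
        (\sum_(s : S) bel s * \sum_(a : Act) vs s a *
            \sum_(sh : S) Pt M s a sh * obs M sh z))].

Definition est_MDP (M : MDP) (z0 : Z) (zs : seq Z) : set belief :=
  foldl (fun B z => \bigcup_(b in B) est_up M b z) [set init_belief M z0] zs.

End MDPDefs.

(* Main.v *)
Require Import Defs.
From HB Require Import structures.
From mathcomp Require Import all_boot all_order all_algebra.
From mathcomp Require Import classical_sets boolp reals.
From mathcomp Require Import ring.
Import Order.TTheory GRing.Theory Num.Theory.
Set Implicit Arguments. Unset Strict Implicit. Unset Printing Implicit Defensive.
Local Open Scope ring_scope.
Local Open Scope classical_set_scope.

Section Proofs.
Variables (R : realType) (S Act Z : finType) (M : MDP R S Act Z).
Variable (t : nat -> Z).

Definition histN n (ss : {ffun 'I_n.+1 -> S}) (acts : {ffun 'I_n -> Act})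
  (i : nat) : seq (S * Act) :=
  map (fun j : 'I_n => (ss (inord j), acts j))
      (filter (fun k : 'I_n => (k < i)%N) (enum 'I_n)).

Definition PP (sigma : scheduler R S Act) n (ss : {ffun 'I_n.+1 -> S})
  (acts : {ffun 'I_n -> Act}) : R :=
  Defs.iota M (ss ord0) *
  \prod_(i < n) (sigma (histN ss acts i) (ss (inord i)) (acts i) *
                 Pt M (ss (inord i)) (acts i) (ss (inord i.+1))).

Definition OB n (ss : {ffun 'I_n.+1 -> S}) : R :=
  \prod_(i < n.+1) obs M (ss i) (t i).

Definition mu (sigma : scheduler R S Act) n : {ffun S -> R} :=
  [ffun s => \sum_(ss : {ffun 'I_n.+1 -> S}) \sum_(acts : {ffun 'I_n -> Act})
     (ss ord_max == s)%:R * (OB ss * PP sigma ss acts)].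

Definition extF (T : finType) n (g : {ffun 'I_n -> T}) (x : T) : {ffun 'I_n.+1 -> T} :=
  [ffun i => if unlift ord_max i is Some j then g j else x].
Definition truncF (T : finType) n (f : {ffun 'I_n.+1 -> T}) : {ffun 'I_n -> T} :=
  [ffun j => f (lift ord_max j)].

Lemma extF_lift (T : finType) n (g : {ffun 'I_n -> T}) x j :
  extF g x (lift ord_max j) = g j.
Proof. by rewrite ffunE liftK. Qed.

Lemma extF_max (T : finType) n (g : {ffun 'I_n -> T}) x : extF g x ord_max = x.
Proof. by rewrite ffunE unlift_none. Qed.

Lemma sum_ffunS (T : finType) n (F : {ffun 'I_n.+1 -> T} -> R) :
  \sum_f F f = \sum_(g : {ffun 'I_n -> T}) \sum_x F (extF g x).
Proof.
rewrite pair_big /= (reindex (fun p : {ffun 'I_n -> T} * T => extF p.1 p.2)) //.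
exists (fun f => (truncF f, f ord_max)) => [[g x] _|f _] /=.
  congr pair; last by rewrite extF_max.
  by apply/ffunP => j; rewrite ffunE extF_lift.
apply/ffunP => i; rewrite ffunE; case: unliftP => [j ->|->] //.
by rewrite ffunE.
Qed.

Lemma sum_eq1 (T : finType) (x : T) (F : T -> R) :
  \sum_y (y == x)%:R * F y = F x.
Proof.
rewrite (bigD1 x) //= eqxx mul1r big1 ?addr0 // => y /negPf ->.
by rewrite mul0r.
Qed.

Lemma sum_eq1' (T : finType) (x : T) (F : T -> R) :
  \sum_y (x == y)%:R * F y = F x.
Proof. by rewrite -(sum_eq1 x F); apply: eq_bigr => y _; rewrite eq_sym. Qed.

Lemma regroup n (F : {ffun 'I_n.+1 -> S} -> {ffun 'I_n -> Act} -> S -> R) :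
  \sum_(g : {ffun 'I_n.+1 -> S}) \sum_(h : {ffun 'I_n -> Act}) F g h (g ord_max) =
  \sum_s \sum_(g : {ffun 'I_n.+1 -> S}) \sum_(h : {ffun 'I_n -> Act})
     (g ord_max == s)%:R * F g h s.
Proof.
symmetry; rewrite exchange_big; apply: eq_bigr => g _.
rewrite exchange_big; apply: eq_bigr => h _.
exact: (sum_eq1' (g ord_max) (F g h)).
Qed.

Lemma inord_lift n (j : nat) : (j < n.+1)%N ->
  (inord j : 'I_n.+2) = lift ord_max (inord j : 'I_n.+1).
Proof.
move=> hj; apply/val_inj; rewrite /= /bump !inordK //.
  by rewrite leqNgt hj.
exact: leqW.
Qed.

Lemma widen_lift n (j : 'I_n) : widen_ord (leqnSn n) j = lift ord_max j.
Proof. by apply/val_inj; rewrite /= /bump leqNgt ltn_ord. Qed.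

Lemma ord0_lift n : (ord0 : 'I_n.+2) = lift ord_max (ord0 : 'I_n.+1).
Proof. by apply/val_inj; rewrite /= /bump. Qed.

Lemma histN_ext n (g : {ffun 'I_n.+1 -> S}) (h : {ffun 'I_n -> Act}) x a i :
  (i <= n)%N -> histN (extF g x) (extF h a) i = histN g h i.
Proof.
move=> hi; rewrite /histN enum_ordSr filter_rcons /=.
have -> : (n < i)%N = false by rewrite ltnNge hi.
rewrite filter_map -map_comp; apply: eq_map => k /=.
rewrite inord_lift ?extF_lift; last exact: leqW.
by rewrite widen_lift extF_lift.
Qed.


Lemma PP_ext sigma n (g : {ffun 'I_n.+1 -> S}) (h : {ffun 'I_n -> Act}) x a :
  PP sigma (extF g x) (extF h a) =
  PP sigma g h * (sigma (histN g h n) (g ord_max) a * Pt M (g ord_max) a x).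
Proof.
rewrite /PP big_ord_recr /= ord0_lift extF_lift -!mulrA; congr (_ * _).
congr (_ * _).
  apply: eq_bigr => i _.
  rewrite histN_ext; last exact: ltnW.
  rewrite widen_lift extF_lift !inord_lift ?extF_lift //; last exact: leqW.
  by rewrite ltnS.
rewrite histN_ext // extF_max.
have e1 : (inord n : 'I_n.+2) = lift ord_max (ord_max : 'I_n.+1).
  by rewrite inord_lift //; congr lift; apply/val_inj; rewrite /= inordK.
have e2 : (inord n.+1 : 'I_n.+2) = ord_max by apply/val_inj; rewrite /= inordK.
by rewrite e1 e2 extF_lift extF_max.
Qed.

Lemma OB_ext n (g : {ffun 'I_n.+1 -> S}) x :
  OB (extF g x) = OB g * obs M x (t n.+1).
Proof.
rewrite /OB big_ord_recr /= extF_max; congr (_ * _).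
apply: eq_bigr => i _.
by rewrite widen_lift extF_lift.
Qed.

Lemma mu_ext sigma n s' :
  mu sigma n.+1 s' =
  \sum_(g : {ffun 'I_n.+1 -> S}) \sum_(h : {ffun 'I_n -> Act})
    OB g * PP sigma g h *
    (\sum_a sigma (histN g h n) (g ord_max) a * Pt M (g ord_max) a s') *
    obs M s' (t n.+1).
Proof.
rewrite ffunE sum_ffunS; apply: eq_bigr => g _.
rewrite exchange_big /= sum_ffunS; apply: eq_bigr => h _.
rewrite mulr_sumr mulr_suml; apply: eq_bigr => a _.
rewrite (eq_bigr (fun x => (x == s')%:R * (OB g * obs M x (t n.+1) *
   (PP sigma g h * (sigma (histN g h n) (g ord_max) a * Pt M (g ord_max) a x)))));
  last by move=> x _; rewrite extF_max OB_ext PP_ext.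
rewrite sum_eq1; ring.
Qed.


Hypothesis wf : wf_MDP M.

Lemma Pt_ge0 s a s' : 0 <= Pt M s a s'.
Proof.
case: wf => _ HP _ _; rewrite /Pt; case E: (Defs.P M s a) => [d|] //.
exact: (HP _ _ _ E).1.
Qed.

Lemma obs_ge0 s z : 0 <= obs M s z.
Proof. by case: wf => _ _ Ho _; exact: (Ho s).1. Qed.

Lemma iota_ge0 s : 0 <= Defs.iota M s.
Proof. by case: wf => [[H _] _ _ _]; exact: H. Qed.

Lemma PP_ge0 sigma n (ss : {ffun 'I_n.+1 -> S}) acts :
  is_scheduler M sigma -> 0 <= PP sigma ss acts.
Proof.
move=> Hs; rewrite /PP mulr_ge0 ?iota_ge0 // prodr_ge0 // => i _.
by rewrite mulr_ge0 ?Pt_ge0 // (Hs _ _).1.1.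
Qed.

Lemma OB_ge0 n (ss : {ffun 'I_n.+1 -> S}) : 0 <= OB ss.
Proof. by rewrite /OB prodr_ge0 // => i _; rewrite obs_ge0. Qed.

Lemma mu_ge0 sigma n s : is_scheduler M sigma -> 0 <= mu sigma n s.
Proof.
move=> Hs; rewrite ffunE sumr_ge0 // => g _; rewrite sumr_ge0 // => h _.
by rewrite mulr_ge0 ?ler0n // mulr_ge0 ?OB_ge0 ?PP_ge0.
Qed.

Definition nrm (m : {ffun S -> R}) : belief R S :=
  [ffun s => m s / \sum_s0 m s0].

Definition G (vs : S -> {ffun Act -> R}) (m : {ffun S -> R}) z : {ffun S -> R} :=
  [ffun s' => \sum_s m s * \sum_a vs s a * Pt M s a s' * obs M s' z].

Lemma divdiv (x y c : R) : c != 0 -> (x / c) / (y / c) = x / y.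
Proof.
move=> hc; rewrite invfM invrK mulrA -[x / c * y^-1]mulrA [c^-1 * _]mulrC.
by rewrite mulrA -mulrA mulVf // mulr1.
Qed.

Lemma KL (vs : S -> {ffun Act -> R}) (m : {ffun S -> R}) z s' :
  (forall s, 0 <= m s) ->
  (\sum_s nrm m s * \sum_a vs s a * Pt M s a s' * obs M s' z) /
  (\sum_s nrm m s * \sum_a vs s a * \sum_sh Pt M s a sh * obs M sh z)
  = nrm (G vs m z) s'.
Proof.
move=> hm.
have Hden : forall b : {ffun S -> R},
  \sum_s b s * \sum_a vs s a * \sum_sh Pt M s a sh * obs M sh z =
  \sum_sh G vs b z sh.
  move=> b; under [RHS]eq_bigr => sh _ do rewrite ffunE.
  rewrite exchange_big /=; apply: eq_bigr => s _; rewrite -mulr_sumr.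
  congr (_ * _); rewrite exchange_big /=; apply: eq_bigr => a _.
  by rewrite mulr_sumr; apply: eq_bigr => sh _; rewrite mulrA.
rewrite Hden /nrm ffunE.
have [c0|c0] := eqVneq (\sum_s0 m s0) 0.
  have m0 : forall s, m s = 0.
    by move=> s; apply: (psumr_eq0P (fun i _ => hm i) c0).
  rewrite big1 ?mul0r; last by move=> s _; rewrite ffunE m0 mul0r mul0r.
  by rewrite ffunE big1 ?mul0r // => s _; rewrite m0 mul0r.
rewrite -[RHS](divdiv _ _ c0); congr (_ / _).
  rewrite ffunE mulr_suml; apply: eq_bigr => s _; rewrite ffunE.
  by rewrite mulrAC.
rewrite mulr_suml; apply: eq_bigr => sh _; rewrite !ffunE mulr_suml.
by apply: eq_bigr => s _; rewrite ffunE mulrAC.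
Qed.


Definition xA sigma n s a : R :=
  \sum_(g : {ffun 'I_n.+1 -> S}) \sum_(h : {ffun 'I_n -> Act})
    (g ord_max == s)%:R * (OB g * PP sigma g h) * sigma (histN g h n) s a.

Definition varsig sigma n s : {ffun Act -> R} :=
  [ffun a => if mu sigma n s == 0 then sigma [::] s a
             else xA sigma n s a / mu sigma n s].

Lemma varsigE sigma n s a : varsig sigma n s a =
  if mu sigma n s == 0 then sigma [::] s a else xA sigma n s a / mu sigma n s.
Proof. by rewrite /varsig; apply: (ffunE (fun a => if mu sigma n s == 0 then sigma [::] s a
             else xA sigma n s a / mu sigma n s)). Qed.

Lemma sum_xA sigma n s : is_scheduler M sigma ->
  \sum_a xA sigma n s a = mu sigma n s.
Proof.
move=> Hs; rewrite ffunE exchange_big /=; apply: eq_bigr => g _.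
rewrite exchange_big /=; apply: eq_bigr => h _.
by rewrite -mulr_sumr (Hs _ _).1.2 mulr1.
Qed.

Lemma xA_ge0 sigma n s a : is_scheduler M sigma -> 0 <= xA sigma n s a.
Proof.
move=> Hs; rewrite sumr_ge0 // => g _; rewrite sumr_ge0 // => h _.
apply: mulr_ge0; last exact: (Hs _ _).1.1.
by rewrite mulr_ge0 ?ler0n // mulr_ge0 ?OB_ge0 ?PP_ge0.
Qed.

Lemma xA_eq sigma n s a : is_scheduler M sigma ->
  xA sigma n s a = mu sigma n s * varsig sigma n s a.
Proof.
move=> Hs; rewrite varsigE; have [m0|m0] := eqVneq (mu sigma n s) 0.
  rewrite m0 mul0r.
  apply: (@psumr_eq0P _ _ predT (xA sigma n s)) => //.
    by move=> i _; exact: xA_ge0.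
  by rewrite -[RHS]m0; exact: (sum_xA n s Hs).
by rewrite mulrC divfK.
Qed.

Lemma varsig_ok sigma n s : is_scheduler M sigma ->
  is_distr (varsig sigma n s) /\
  (forall a, Defs.P M s a = None -> varsig sigma n s a = 0).
Proof.
move=> Hs; split; first split.
- move=> a; rewrite varsigE; case: ifP => _; first exact: (Hs _ _).1.1.
  by rewrite divr_ge0 ?xA_ge0 ?mu_ge0.
- have [m0|m0] := eqVneq (mu sigma n s) 0.
    by under eq_bigr => a _ do rewrite varsigE m0 eqxx; exact: (Hs _ _).1.2.
  under eq_bigr => a _ do rewrite varsigE (negbTE m0).
  by rewrite -mulr_suml sum_xA // divff.
- move=> a Ha; rewrite varsigE; case: ifP => _; first exact: (Hs _ _).2.
  rewrite /xA big1 ?mul0r // => g _; rewrite big1 // => h _.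
  by rewrite (Hs _ _).2 // mulr0.
Qed.

Lemma sum3 (I J K : finType) (F : I -> J -> K -> R) (c : K -> R) :
  \sum_k (\sum_i \sum_j F i j k) * c k = \sum_i \sum_j \sum_k F i j k * c k.
Proof.
transitivity (\sum_k \sum_i \sum_j F i j k * c k).
  apply: eq_bigr => k _; rewrite mulr_suml; apply: eq_bigr => i _.
  by rewrite mulr_suml.
rewrite exchange_big; apply: eq_bigr => i _; by rewrite exchange_big.
Qed.

Lemma mu_succA sigma n : is_scheduler M sigma ->
  mu sigma n.+1 = G (varsig sigma n) (mu sigma n) (t n.+1).
Proof.
move=> Hs; apply/ffunP => s'; rewrite mu_ext ffunE.
rewrite (regroup (fun g h s => OB g * PP sigma g h *
    (\sum_a sigma (histN g h n) s a * Pt M s a s') * obs M s' (t n.+1))).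
apply: eq_bigr => s _.
transitivity (\sum_a xA sigma n s a * (Pt M s a s' * obs M s' (t n.+1))).
  rewrite /xA sum3; apply: eq_bigr => g _; apply: eq_bigr => h _.
  rewrite mulr_sumr mulr_suml mulr_sumr; apply: eq_bigr => a _.
  ring.
rewrite mulr_sumr; apply: eq_bigr => a _.
by rewrite xA_eq // !mulrA.
Qed.


Definition schedB (sigma : scheduler R S Act) (vs : S -> {ffun Act -> R}) n
  : scheduler R S Act :=
  fun h s => if size h == n then vs s else sigma h s.

Lemma size_histN n (ss : {ffun 'I_n.+1 -> S}) (acts : {ffun 'I_n -> Act}) i :
  (i <= n)%N -> size (histN ss acts i) = i.
Proof.
move=> hi; rewrite /histN size_map -(size_map val).
have -> : map val (filter (fun k : 'I_n => (k < i)%N) (enum 'I_n)) =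
          filter (fun k => (k < i)%N) (iota 0 n).
  by rewrite -val_enum_ord filter_map.
by rewrite (filter_iota_ltn 0 (j:=i) hi) size_iota.
Qed.

Lemma PP_B sigma vs n (g : {ffun 'I_n.+1 -> S}) h :
  PP (schedB sigma vs n) g h = PP sigma g h.
Proof.
rewrite /PP; congr (_ * _); apply: eq_bigr => i _.
by rewrite /schedB size_histN ?(ltnW (ltn_ord i)) // ltn_eqF.
Qed.

Lemma mu_B sigma vs n : mu (schedB sigma vs n) n = mu sigma n.
Proof.
apply/ffunP => s; rewrite !ffunE; apply: eq_bigr => g _; apply: eq_bigr => h _.
by rewrite PP_B.
Qed.

Lemma mu_succB sigma vs n :
  mu (schedB sigma vs n) n.+1 = G vs (mu sigma n) (t n.+1).
Proof.
apply/ffunP => s'; rewrite mu_ext ffunE.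
under eq_bigr => g _ do under eq_bigr => h _ do
  rewrite /schedB size_histN // eqxx PP_B.
rewrite (regroup (fun g h s => OB g * PP sigma g h *
    (\sum_a vs s a * Pt M s a s') * obs M s' (t n.+1))).
apply: eq_bigr => s _; rewrite ffunE !mulr_suml.
apply: eq_bigr => g _; rewrite !mulr_suml; apply: eq_bigr => h _.
rewrite -mulr_suml.
ring.
Qed.

Lemma schedB_ok sigma vs n : is_scheduler M sigma ->
  (forall s, is_distr (vs s) /\ (forall a, Defs.P M s a = None -> vs s a = 0)) ->
  is_scheduler M (schedB sigma vs n).
Proof. by move=> Hs Hv h s; rewrite /schedB; case: ifP. Qed.


Lemma sum_ffun0 (T : finType) (F : {ffun 'I_0 -> T} -> R) (f0 : {ffun 'I_0 -> T}) :
  \sum_f F f = F f0.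
Proof.
rewrite (big_pred1 f0) // => f /=; symmetry; apply/eqP/ffunP => -[m hm].
by have := ltn0 m; rewrite hm.
Qed.

Lemma mu0 sigma : mu sigma 0 = [ffun s => Defs.iota M s * obs M s (t 0)].
Proof.
apply/ffunP => s; rewrite !ffunE sum_ffunS.
have e : (ord0 : 'I_1) = ord_max by apply/val_inj.
set f0 := [ffun i : 'I_0 => s].
rewrite (sum_ffun0 _ f0).
transitivity (\sum_x (x == s)%:R * (obs M x (t 0) * Defs.iota M x)); last first.
  by rewrite (sum_eq1 s (fun x => obs M x (t 0) * Defs.iota M x)) mulrC.
apply: eq_bigr => x _.
rewrite /OB /PP.
under eq_bigr => h _ do rewrite big_ord1 big_ord0 mulr1 e !extF_max.
by rewrite sumr_const card_ffun card_ord expn0 mulr1n.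
Qed.

Lemma init_nrm z : init_belief M z = nrm [ffun s => Defs.iota M s * obs M s z].
Proof.
rewrite /init_belief; case: ifP => [_|/negbT H].
  by apply/ffunP => s; rewrite !ffunE; congr (_ / _); apply: eq_bigr => s0 _; rewrite ffunE.
have H0 : forall s, Defs.iota M s * obs M s z = 0.
  move=> s; rewrite negb_exists in H; have := forallP H s => Hs.
  by apply/eqP; rewrite eq_le mulr_ge0 ?iota_ge0 ?obs_ge0 // andbT leNgt.
by apply/ffunP => s; rewrite !ffunE H0 mul0r.
Qed.

Fixpoint estN n : set (belief R S) :=
  match n with
  | 0 => [set init_belief M (t 0)]
  | k.+1 => \bigcup_(b in estN k) est_up M b (t k.+1)
  end.

Lemma claimA n sigma : is_scheduler M sigma -> estN n (nrm (mu sigma n)).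
Proof.
move=> Hs; elim: n => [|n IH] /=.
  by rewrite mu0 init_nrm.
exists (nrm (mu sigma n)) => //.
exists (varsig sigma n); split; first by move=> s; exact: varsig_ok.
move=> s'; rewrite mu_succA // -KL //; last by move=> s; exact: mu_ge0.
Qed.

Definition sched0 : scheduler R S Act :=
  fun h s => [ffun a => if [pick a0 | Defs.P M s a0 != None] is Some a0
                        then (a == a0)%:R else 0].

Lemma sched0_ok : is_scheduler M sched0.
Proof.
move=> h s; case: wf => _ _ _ Hav.
rewrite /sched0; case: pickP => [a0 Ha0|Hn]; last first.
  by case: (Hav s) => a Ha; move/negbFE/eqP: (Hn a).
split; first split.
- by move=> a; rewrite ffunE ler0n.
- under eq_bigr => a _ do rewrite ffunE.
  have := sum_eq1 a0 (fun _ => 1); rewrite /=.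
  under eq_bigr => a _ do rewrite mulr1.
  by [].
- move=> a Ha; rewrite ffunE; case: eqP => // ea.
  by move: Ha0; rewrite -ea Ha.
Qed.

Lemma claimB n bel : estN n bel ->
  exists sigma, is_scheduler M sigma /\ bel = nrm (mu sigma n).
Proof.
elim: n bel => [|n IH] bel /=.
  by move=> ->; exists sched0; split; [exact: sched0_ok | rewrite mu0 init_nrm].
move=> [b /IH [sigma [Hs ->]] [vs [Hv Hbel]]].
exists (schedB sigma vs n); split; first exact: schedB_ok.
apply/ffunP => s'; rewrite Hbel mu_succB KL //.
by move=> s; exact: mu_ge0.
Qed.

End Proofs.

Lemma est_fold (R : realType) (S Act Z : finType) (M : MDP R S Act Z)
  (t : nat -> Z) (z0 : Z) (zs : seq Z) (k : nat) :
  (forall i, (i < size zs)%N -> t (k + i).+1 = nth z0 zs i) ->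
  foldl (fun B z => \bigcup_(b in B) est_up M b z) (estN M t k) zs =
  estN M t (k + size zs).
Proof.
elim: zs k => [|z zs IH] k H /=; first by rewrite addn0.
have ez : t k.+1 = z by have := H 0%N isT; rewrite addn0.
have -> : \bigcup_(b in estN M t k) est_up M b z = estN M t k.+1 by rewrite /= ez.
rewrite IH ?addSnnS // => i hi.
by rewrite addSn -addnS H.
Qed.

Lemma est_eq (R : realType) (S Act Z : finType) (M : MDP R S Act Z)
  (z0 : Z) (zs : seq Z) :
  est_MDP M z0 zs = estN M (tr z0 zs) (size zs).
Proof.
rewrite /est_MDP.
have -> : [set init_belief M z0] = estN M (tr z0 zs) 0 by [].
by rewrite (@est_fold _ _ _ _ M (tr z0 zs) z0) // => i _; rewrite add0n.
Qed.

Lemma risk_eq (R : realType) (S Act Z : finType) (M : MDP R S Act Z)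
  (z0 : Z) (zs : seq Z) (r : S -> R) sigma :
  risk_value M z0 zs r sigma =
  \sum_s nrm (mu M (tr z0 zs) sigma (size zs)) s * r s.
Proof.
have HT : Pr_trace M z0 zs sigma = \sum_s mu M (tr z0 zs) sigma (size zs) s.
  rewrite /Pr_trace (regroup (fun g h s => Pr_path M sigma g h * Pr_obs M z0 g)).
  apply: eq_bigr => s _; rewrite ffunE; apply: eq_bigr => g _; apply: eq_bigr => h _.
  by rewrite [Pr_path _ _ _ _ * _]mulrC.
rewrite /risk_value (regroup (fun g h s => Pr_obs M z0 g * Pr_path M sigma g h /
   Pr_trace M z0 zs sigma * r s)).
apply: eq_bigr => s _; rewrite !ffunE -HT !mulr_suml; apply: eq_bigr => g _.
rewrite !mulr_suml; apply: eq_bigr => h _.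
rewrite !mulrA; congr (_ * _); rewrite -!mulrA; congr (_ * _); congr (_ * _).
Qed.

Unset Implicit Arguments.

Theorem theorem1 (R : realType) (S Act Z : finType) (M : MDP R S Act Z)
  (z0 : Z) (zs : seq Z) (r : S -> R) :
  wf_MDP M -> (forall s, 0 <= r s) ->
  weighted_risk M z0 zs r =
  sup [set \sum_(s : S) bel s * r s | bel in est_MDP M z0 zs].
Proof.
move=> wf hr; rewrite /weighted_risk; congr sup.
apply/seteqP; split.
  move=> v [sigma [Hs ->]].
  exists (nrm (mu M (tr z0 zs) sigma (size zs))).
    by rewrite est_eq; exact: claimA.
  by rewrite risk_eq.
move=> v [bel Hb <-]; rewrite est_eq in Hb.
have [sigma [Hs ->]] := claimB wf Hb.
by exists sigma; split => //; rewrite risk_eq.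
Qed.
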